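(* Fix $y_1\in T_2$ and for each integer $m>1$ set $$\Theta_m(y_1):=\Big\{y\in T_2:\ \beta(y,y_1)\in\Big[\frac{\pi}{2}-\frac1m,\frac{\pi}{2}\Big]\Big\}.$$ Unless $\Theta_m(y_1)$ is empty for all sufficiently large $m$, there exist $M>0$ and $K>0$ such that $$|s^+(y_1)-s^+(y)|\ge K|y_1-y|\qquad\text{for all } y\in\Theta_m(y_1)\text{ and all } m>M.$$
   Context: Setting. $n>1$, $\mathbf S^n$ the unit sphere in $\mathbf R^{n+1}$; $(\mu,\nu)$ symmetrically suitable Borel probability measures on $\mathbf S^n$ (there is $\epsilon>0$ with $\epsilon\mathcal H^n\le\mu,\nu\le\epsilon^{-1}\mathcal H^n$). For optimal transport with cost $|x-y|^2$, by Gangbo–McCann there is a convex potential $\psi$ with homeomorphism $t^+:\mathbf S^n\to\mathbf S^n$, its inverse $s^+:=(t^+)^{-1}$, a bivalent target set $T_2\subset\mathbf S^n$ and a continuous injective map $s^-:T_2\to\mathbf S^n$ such that for $y\in T_2$: $s^+(y)\ne s^-(y)$, $y\cdot s^+(y)>0$, $y\cdot s^-(y)<0$, and $s^+(y)-s^-(y)=\omega(y)y$ with $\omega(y)>0$; moreover $(s^-(y_1)-s^-(y_0))\cdot(y_1-y_0)\ge0$ for $y_0,y_1\in T_2$ (monotonicity of $\partial\psi$). For $y,y_1\in T_2$ with $y\ne\pm y_1$, $\beta(y,y_1)$ denotes the angle $\arccos\frac{a\cdot b}{|a||b|}$ between $a=y_1-y$ and $b=\omega(y_1)y_1-\omega(y)y$.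 *)

(* Defs.v *)
From HB Require Import structures.
From mathcomp Require Import all_boot all_order all_algebra.
From mathcomp Require Import all_classical all_reals all_analysis.
Set Implicit Arguments. Unset Strict Implicit. Unset Printing Implicit Defensive.
Import Order.TTheory GRing.Theory Num.Theory.
Import numFieldNormedType.Exports.
Local Open Scope ring_scope.
Local Open Scope classical_set_scope.

Section Defs.
Variables (R : realType) (k : nat).

Definition dotv (u v : 'rV[R]_k) : R := \sum_(i < k) u 0 i * v 0 i.
Definition enorm (u : 'rV[R]_k) : R := Num.sqrt (dotv u u).

Definition usphere : set 'rV[R]_k := [set x | enorm x = 1].

Definition angle (a b : 'rV[R]_k) : R := acos (dotv a b / (enorm a * enorm b)).
End Defs.
Arguments usphere {R k}.

Definition beta (R : realType) (k : nat) (omega : 'rV[R]_k -> R) (y y1 : 'rV[R]_k) : R :=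
  angle (y1 - y) (omega y1 *: y1 - omega y *: y).

(* Theta_m(y1) = { y in T2 : beta(y,y1) in [pi/2 - 1/m, pi/2] }, with y <> +-y1
   (beta is only defined for y <> +-y1) *)
Definition Theta (R : realType) (k : nat) (T2 : set 'rV[R]_k) (omega : 'rV[R]_k -> R)
  (y1 : 'rV[R]_k) (m : nat) : set 'rV[R]_k :=
  [set y | T2 y /\ y <> y1 /\ y <> - y1 /\
           pi / 2 - (m%:R)^-1 <= beta omega y y1 <= pi / 2].

(* Main.v *)
Require Import Defs.
From HB Require Import structures.
From mathcomp Require Import all_boot all_order all_algebra.
From mathcomp Require Import all_classical all_reals all_analysis.
From mathcomp Require Import ring lra.
Import Order.TTheory GRing.Theory Num.Theory.
Import numFieldNormedType.Exports.
Local Open Scope ring_scope.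
Local Open Scope classical_set_scope.

Section Dot.
Variables (R : realType) (k : nat).
Implicit Types u v w : 'rV[R]_k.
Lemma dotvC u v : dotv u v = dotv v u.
Proof. by apply: eq_bigr => i _; rewrite mulrC. Qed.
Lemma dotvDl u v w : dotv (u + v) w = dotv u w + dotv v w.
Proof. rewrite /dotv -big_split /=; apply: eq_bigr => i _; rewrite !mxE; ring. Qed.
Lemma dotvBl u v w : dotv (u - v) w = dotv u w - dotv v w.
Proof.
rewrite /dotv -sumrB /=; apply: eq_bigr => i _; rewrite !mxE; ring. Qed.
Lemma dotvZl a u w : dotv (a *: u) w = a * dotv u w.
Proof. rewrite /dotv mulr_sumr; apply: eq_bigr => i _; rewrite !mxE; ring. Qed.
Lemma dotvDr u v w : dotv w (u + v) = dotv w u + dotv w v.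
Proof. by rewrite dotvC dotvDl !(dotvC w). Qed.
Lemma dotvBr u v w : dotv w (u - v) = dotv w u - dotv w v.
Proof. by rewrite dotvC dotvBl !(dotvC w). Qed.
Lemma dotvZr a u w : dotv w (a *: u) = a * dotv w u.
Proof. by rewrite dotvC dotvZl dotvC. Qed.
Lemma dotv_ge0 u : 0 <= dotv u u.
Proof. apply: sumr_ge0 => i _; rewrite -expr2; exact: sqr_ge0. Qed.
Lemma enorm_sq u : enorm u ^+ 2 = dotv u u.
Proof. by rewrite sqr_sqrtr // dotv_ge0. Qed.
Lemma enorm_ge0 u : 0 <= enorm u.
Proof. exact: sqrtr_ge0. Qed.
Lemma unit_dot u : enorm u = 1 -> dotv u u = 1.
Proof. by move=> h; rewrite -enorm_sq h expr1n. Qed.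
End Dot.
Arguments dotvC {R k}. Arguments dotvDl {R k}. Arguments dotvBl {R k}. Arguments dotvZl {R k}.
Arguments dotvDr {R k}. Arguments dotvBr {R k}. Arguments dotvZr {R k}. Arguments dotv_ge0 {R k}.
Arguments enorm_sq {R k}. Arguments enorm_ge0 {R k}. Arguments unit_dot {R k}.

Theorem lemma6p9 (R : realType) (n : nat) (hn : (1 < n)%N)
  (tp sp : 'rV[R]_(n.+1) -> 'rV[R]_(n.+1))
  (T2 : set 'rV[R]_(n.+1)) (sm : 'rV[R]_(n.+1) -> 'rV[R]_(n.+1))
  (omega : 'rV[R]_(n.+1) -> R)
  (* t^+ : S^n -> S^n homeomorphism with inverse s^+ *)
  (tp_sph : forall x, usphere x -> usphere (tp x))
  (sp_sph : forall y, usphere y -> usphere (sp y))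
  (sp_tp : forall x, usphere x -> sp (tp x) = x)
  (tp_sp : forall y, usphere y -> tp (sp y) = y)
  (tp_cont : {within usphere, continuous tp})
  (sp_cont : {within usphere, continuous sp})
  (* bivalent target set and s^- : T2 -> S^n continuous injective *)
  (T2_sph : T2 `<=` usphere)
  (sm_sph : forall y, T2 y -> usphere (sm y))
  (sm_cont : {within T2, continuous sm})
  (sm_inj : {in T2 &, injective sm})
  (sp_ne_sm : forall y, T2 y -> sp y <> sm y)
  (sp_pos : forall y, T2 y -> 0 < dotv y (sp y))
  (sm_neg : forall y, T2 y -> dotv y (sm y) < 0)
  (omega_pos : forall y, T2 y -> 0 < omega y)
  (sp_sm_omega : forall y, T2 y -> sp y - sm y = omega y *: y)
  (sm_mono : forall y0 y1, T2 y0 -> T2 y1 -> 0 <= dotv (sm y1 - sm y0) (y1 - y0))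
  (y1 : 'rV[R]_(n.+1)) (hy1 : T2 y1) :
  ~ (exists M0 : nat, forall m : nat, (M0 < m)%N -> Theta T2 omega y1 m = set0) ->
  exists M : R, exists K : R, 0 < M /\ 0 < K /\
    forall m : nat, (1 < m)%N -> M < m%:R ->
      forall y, Theta T2 omega y1 m y ->
        K * enorm (y1 - y) <= enorm (sp y1 - sp y).
Proof.
move=> _; exists 1, (omega y1 / 2).
have w1 := omega_pos _ hy1.
split; first by [].
split; first lra.
move=> m _ _ y [hy _].
have w := omega_pos _ hy.
have u1 := @unit_dot _ _ _ (T2_sph _ hy1).
have u := @unit_dot _ _ _ (T2_sph _ hy).
have mono := sm_mono _ _ hy hy1.
have eD : sp y1 - sp y = (sm y1 - sm y) + (omega y1 *: y1 - omega y *: y).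
  have e1 : sp y1 = sm y1 + omega y1 *: y1 by rewrite -(sp_sm_omega _ hy1) addrC subrK.
  have e0 : sp y = sm y + omega y *: y by rewrite -(sp_sm_omega _ hy) addrC subrK.
  rewrite e1 e0; rewrite !opprD !addrA; congr (_ + _); rewrite -!addrA; congr (_ + _).
  by rewrite addrC.
set D := sp y1 - sp y.
set A := y1 - y.
set S := sm y1 - sm y.
have hDA : dotv D A = dotv S A + (omega y1 * (dotv y1 y1 - dotv y1 y) -
    omega y * (dotv y y1 - dotv y y)).
  rewrite /D eD dotvDl (@dotvBl _ _ (omega y1 *: y1)) !dotvZl /A (@dotvBr _ _ y1 y y1) (@dotvBr _ _ y1 y y).
  by [].
have hAA : dotv A A = dotv y1 y1 - dotv y y1 - (dotv y y1 - dotv y y).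
  by rewrite /A !dotvBl !dotvBr (@dotvC _ _ y1 y).
have hsq : 0 <= dotv D D - 2 * (omega y1 / 2) * dotv D A + (omega y1 / 2) ^+ 2 * dotv A A.
  have -> : dotv D D - 2 * (omega y1 / 2) * dotv D A + (omega y1 / 2) ^+ 2 * dotv A A
    = dotv (D - (omega y1 / 2) *: A) (D - (omega y1 / 2) *: A).
    rewrite (dotvBl D) (dotvBr D _ D) (dotvBr D _ ((omega y1 / 2) *: A)) !dotvZl !dotvZr (dotvC A D).
    ring.
  exact: dotv_ge0.
have hS : 0 <= dotv S A by exact: mono.
rewrite (@dotvC _ _ y1 y) u u1 in hDA hAA.
rewrite -ler_sqr; last 2 first.
- by rewrite nnegrE; apply: mulr_ge0; [lra | exact: enorm_ge0].
- by rewrite nnegrE; exact: enorm_ge0.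
rewrite exprMn !enorm_sq.
set c := dotv y y1 in hDA hAA.
have hc : 0 <= 1 - c.
  have := dotv_ge0 A; rewrite hAA; lra.
set K := omega y1 / 2 in hsq *.
have hK : K = omega y1 / 2 by [].
have hp : 0 <= K * (dotv D A - K * dotv A A).
  apply: mulr_ge0; first by rewrite hK; apply: divr_ge0; [exact: ltW|].
  rewrite hDA hAA hK.
  move: hS hc w1 w; set sa := dotv S A; set w1' := omega y1; set w' := omega y.
  move=> hS hc w1 w.
  have : 0 <= w' * (1 - c) by apply: mulr_ge0; [exact: ltW|].
  clear -hS hc w1 w. move=> h; lra.
move: hsq hp; set DD := dotv D D; set DA := dotv D A; set AA := dotv A A.
clear -K. move=> h1 h2; lra.
Qed.
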